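(* Fix an edge $ij\in\mathcal E$, dual variables $(\lambda,\xi)$, and let $\Gamma=\Gamma(\lambda,\xi)$. Then: (a) If $\xi'=\xi$ and $\lambda'$ agrees with $\lambda$ except $\lambda'_{ij}(x)=\lambda_{ij}(x)+\frac12\log\frac{\sum_{x'}\Gamma_{ij}(x,x')}{\Gamma_i(x)}$ for all $x\in\chi$ (so that $\Gamma(\lambda',\xi')$ is the projection of $\Gamma$ onto $\{\Gamma_{ij}\mathbb 1=\Gamma_i\}$), then $L(\lambda',\xi')-L(\lambda,\xi)=2h^2(\Gamma_{ij}\mathbb 1,\Gamma_i)$. (b) If $\lambda'=\lambda$ and $\xi'$ agrees with $\xi$ except $\xi'_{ij}=\xi_{ij}+\log\sum_{x_i,x_j}\Gamma_{ij}(x_i,x_j)$ and $\xi'_i=\xi_i+\log\sum_x\Gamma_i(x)$ (so that $\Gamma(\lambda',\xi')$ is obtained by normalizing $\Gamma_{ij}$ and $\Gamma_i$), then $L(\lambda',\xi')-L(\lambda,\xi)\ge0$. (c) If $\xi'=\xi$ and $\lambda'$ agrees with $\lambda$ except $\lambda'_{ji}(x)=\lambda_{ji}(x)+\frac12\log\frac{\sum_{x'}\Gamma_{ij}(x',x)}{\Gamma_j(x)}$ for all $x\in\chi$ (so that $\Gamma(\lambda',\xi')$ is the projection onto $\{\Gamma_{ij}^\top\mathbb 1=\Gamma_j\}$), then $L(\lambda',\xi')-L(\lambda,\xi)=2h^2(\Gamma_{ij}^\top\mathbb 1,\Gamma_j)$. (d) If $\lambda'=\lambda$ and $\xi'$ agrees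 with $\xi$ except $\xi'_{ij}=\xi_{ij}+\log\sum_{x_i,x_j}\Gamma_{ij}(x_i,x_j)$ and $\xi'_j=\xi_j+\log\sum_x\Gamma_j(x)$, then $L(\lambda',\xi')-L(\lambda,\xi)\ge0$.
   Context: Let $G=(\mathcal V,\mathcal E)$ be a graph with $\mathcal V=\{1,\dots,n\}$, edges written as ordered pairs $ij$, $N(i)$ the set of neighbours of $i$, $\chi=\{0,\dots,d-1\}$, $\eta>0$, and $C$ a cost vector with components $C_i\in\mathbb R^d$ ($i\in\mathcal V$), $C_{ij}\in\mathbb R^{d\times d}$ ($ij\in\mathcal E$). Dual variables $(\lambda,\xi)$ consist of, for each edge $ij\in\mathcal E$, vectors $\lambda_{ij}\in\mathbb R^d$ (associated with vertex $i$) and $\lambda_{ji}\in\mathbb R^d$ (associated with vertex $j$) and a scalar $\xi_{ij}$, and for each vertex a scalar $\xi_i$. The associated marginal vector $\Gamma(\lambda,\xi)$ is $\Gamma_{ij}(x_i,x_j)=\exp(-\eta C_{ij}(x_i,x_j)-\lambda_{ij}(x_i)-\lambda_{ji}(x_j)-\xi_{ij})$ and $\Gamma_i(x)=\exp(-\eta C_i(x)-\xi_i+\sum_{j\in N(i)}\lambda_{ij}(x))$. The Lyapunov function is $L(\lambda,\xi)=-\sum_{ij\in\mathcal E}\sum_{x_i,x_j}\Gamma_{ij}(x_i,x_j)-\sum_{i\in\mathcal V}\sum_x\Gamma_i(x)-\sum_{ij\in\mathcal E}\xi_{ij}-\sum_{i\in\mathcal V}\xi_i+\sum_{ij\in\mathcal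 E}\sum_{x_i,x_j}e^{-\eta C_{ij}(x_i,x_j)}+\sum_{i}\sum_{x}e^{-\eta C_i(x)}$, with $\Gamma=\Gamma(\lambda,\xi)$. For nonnegative vectors $p,q$, $h(p,q)=\frac1{\sqrt2}\|\sqrt p-\sqrt q\|_2$ (entrywise square roots). *)

(* Defs.v *)
From HB Require Import structures.
From mathcomp Require Import all_boot all_order all_algebra.
From mathcomp Require Import all_classical all_reals.
From mathcomp Require Import all_analysis.
Set Implicit Arguments. Unset Strict Implicit. Unset Printing Implicit Defensive.
Import Order.TTheory GRing.Theory Num.Theory.
Local Open Scope ring_scope.

Section Defs.
Variables (R : realType) (n d : nat).

Definition simple_edges (E : {set 'I_n * 'I_n}) : Prop :=
  (forall e, e \in E -> e.1 != e.2) /\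
  (forall i j, (i, j) \in E -> (j, i) \notin E).

Definition nbrs (E : {set 'I_n * 'I_n}) (i : 'I_n) : {set 'I_n} :=
  [set j | ((i, j) \in E) || ((j, i) \in E)].

(* Dual variables: lam i j : vector at vertex i of the edge joining i and j
   (meaningful when ij or ji is an edge), xiE i j : scalar of edge ij,
   xiV i : scalar of vertex i.  State space chi = 'I_d. *)

Definition GammaE (eta : R) (CE : 'I_n -> 'I_n -> 'I_d -> 'I_d -> R)
  (lam : 'I_n -> 'I_n -> 'I_d -> R) (xiE : 'I_n -> 'I_n -> R)
  (i j : 'I_n) (a b : 'I_d) : R :=
  expR (- eta * CE i j a b - lam i j a - lam j i b - xiE i j).

Definition GammaV (E : {set 'I_n * 'I_n}) (eta : R) (CV : 'I_n -> 'I_d -> R)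
  (lam : 'I_n -> 'I_n -> 'I_d -> R) (xiV : 'I_n -> R)
  (i : 'I_n) (a : 'I_d) : R :=
  expR (- eta * CV i a - xiV i + \sum_(j in nbrs E i) lam i j a).

Definition Lyap (E : {set 'I_n * 'I_n}) (eta : R)
  (CV : 'I_n -> 'I_d -> R) (CE : 'I_n -> 'I_n -> 'I_d -> 'I_d -> R)
  (lam : 'I_n -> 'I_n -> 'I_d -> R) (xiE : 'I_n -> 'I_n -> R)
  (xiV : 'I_n -> R) : R :=
  - (\sum_(e in E) \sum_(a < d) \sum_(b < d) GammaE eta CE lam xiE e.1 e.2 a b)
  - (\sum_(i < n) \sum_(a < d) GammaV E eta CV lam xiV i a)
  - (\sum_(e in E) xiE e.1 e.2)
  - (\sum_(i < n) xiV i)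
  + (\sum_(e in E) \sum_(a < d) \sum_(b < d) expR (- eta * CE e.1 e.2 a b))
  + (\sum_(i < n) \sum_(a < d) expR (- eta * CV i a)).

Definition hellinger (p q : 'I_d -> R) : R :=
  (Num.sqrt 2)^-1 * Num.sqrt (\sum_(x < d) (Num.sqrt (p x) - Num.sqrt (q x)) ^+ 2).

Definition rowsum (G : 'I_d -> 'I_d -> R) (a : 'I_d) : R := \sum_(b < d) G a b.
Definition colsum (G : 'I_d -> 'I_d -> R) (b : 'I_d) : R := \sum_(a < d) G a b.
Definition totsum (G : 'I_d -> 'I_d -> R) : R := \sum_(a < d) \sum_(b < d) G a b.

End Defs.

(* Main.v *)
Require Import Defs.
From HB Require Import structures.
From mathcomp Require Import all_boot all_order all_algebra.
From mathcomp Require Import all_classical all_reals.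
From mathcomp Require Import all_analysis.
From mathcomp Require Import ring lra.
Import Order.TTheory GRing.Theory Num.Theory.
Local Open Scope ring_scope.

Lemma sum_diff1 (R : zmodType) (T : finType) (P : pred T) (e0 : T) (f g : T -> R) :
  P e0 -> (forall e, P e -> e != e0 -> f e = g e) ->
  \sum_(e | P e) f e - \sum_(e | P e) g e = f e0 - g e0.
Proof.
move=> He Hfg.
rewrite (bigD1 e0) //= [X in _ - X](bigD1 e0) //=.
rewrite [X in _ - (_ + X)](eq_bigr f); last first.
  by move=> e /andP[Pe ne]; rewrite Hfg.
by rewrite opprD addrACA subrr addr0.
Qed.

Lemma Lyap_diff (R : realType) (n d : nat) (E : {set 'I_n * 'I_n}) (eta : R)
  (CV : 'I_n -> 'I_d -> R) (CE : 'I_n -> 'I_n -> 'I_d -> 'I_d -> R)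
  lam xiE xiV lam' xiE' xiV' :
  Lyap E eta CV CE lam' xiE' xiV' - Lyap E eta CV CE lam xiE xiV =
  (\sum_(e in E) \sum_(a < d) \sum_(b < d) GammaE eta CE lam xiE e.1 e.2 a b
   - \sum_(e in E) \sum_(a < d) \sum_(b < d) GammaE eta CE lam' xiE' e.1 e.2 a b)
  + (\sum_(k < n) \sum_(a < d) GammaV E eta CV lam xiV k a
   - \sum_(k < n) \sum_(a < d) GammaV E eta CV lam' xiV' k a)
  + (\sum_(e in E) xiE e.1 e.2 - \sum_(e in E) xiE' e.1 e.2)
  + (\sum_(k < n) xiV k - \sum_(k < n) xiV' k).
Proof. rewrite /Lyap; lra. Qed.

Lemma expR_half_ln (R : realType) (y : R) : 0 < y ->
  expR (2^-1 * ln y) = Num.sqrt y.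
Proof.
move=> y0.
have h1 : 0 <= expR (2^-1 * ln y) by apply/ltW/expR_gt0.
rewrite -[LHS]ger0_norm // -sqrtr_sqr.
by rewrite -expRM_natl mulrA divff ?mul1r ?lnK ?pnatr_eq0.
Qed.

Lemma bal_ineq (R : realType) (x : R) : 0 <= x -> 0 <= x - x * expR (- ln x) - ln x.
Proof.
rewrite le0r => /orP[/eqP->|x0]; first by rewrite ln0 // mul0r !subr0.
rewrite expRN lnK ?posrE // divff ?gt_eqF //.
have := expR_ge1Dx (ln x); rewrite lnK ?posrE //; lra.
Qed.

Lemma hell_key (R : realType) (r g : R) : 0 < r -> 0 < g ->
  r - r * expR (- (2^-1 * ln (r / g))) + (g - g * expR (2^-1 * ln (r / g)))
  = (Num.sqrt r - Num.sqrt g) ^+ 2.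
Proof.
move=> r0 g0.
rewrite expRN expR_half_ln ?divr_gt0 // sqrtrM ?ltW // sqrtrV ?ltW //.
have s0 : 0 < Num.sqrt r by rewrite sqrtr_gt0.
have t0 : 0 < Num.sqrt g by rewrite sqrtr_gt0.
move: s0 t0 (sqr_sqrtr (ltW r0)) (sqr_sqrtr (ltW g0)).
generalize (Num.sqrt r) (Num.sqrt g) => s t s0 t0 Hr Hg.
rewrite -Hr -Hg; field. by rewrite !gt_eqF.
Qed.

Lemma hell_sq (R : realType) d (p q : 'I_d -> R) :
  2 * hellinger p q ^+ 2 = \sum_(x < d) (Num.sqrt (p x) - Num.sqrt (q x)) ^+ 2.
Proof.
rewrite /hellinger exprMn sqr_sqrtr; last by apply: sumr_ge0 => x _; apply: sqr_ge0.
rewrite exprVn sqr_sqrtr // mulrA divff ?mul1r //.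
Qed.

Lemma partBD (R : realType) (n d : nat) (E : {set 'I_n * 'I_n}) (eta : R)
  (CV : 'I_n -> 'I_d -> R) (CE : 'I_n -> 'I_n -> 'I_d -> 'I_d -> R)
  (i j v : 'I_n)
  (lam : 'I_n -> 'I_n -> 'I_d -> R) (xiE : 'I_n -> 'I_n -> R) (xiV : 'I_n -> R) :
  (i, j) \in E ->
  forall (xiE' : 'I_n -> 'I_n -> R) (xiV' : 'I_n -> R),
     (forall k l, (k, l) != (i, j) -> xiE' k l = xiE k l) ->
     xiE' i j = xiE i j + ln (totsum (GammaE eta CE lam xiE i j)) ->
     (forall k, k != v -> xiV' k = xiV k) ->
     xiV' v = xiV v + ln (\sum_(x < d) GammaV E eta CV lam xiV v x) ->
     0 <= Lyap E eta CV CE lam xiE' xiV' - Lyap E eta CV CE lam xiE xiV.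
Proof.
move=> Hij xiE' xiV' HxE HxEij HxV HxVv.
set T := totsum (GammaE eta CE lam xiE i j).
set S := \sum_(x < d) GammaV E eta CV lam xiV v x.
rewrite Lyap_diff (@sum_diff1 _ _ _ (i, j)) //; last first.
  move=> [k l] _ ne; apply: eq_bigr => a _; apply: eq_bigr => b _.
  by rewrite /GammaE /= HxE.
rewrite (@sum_diff1 _ _ _ v) //; last first.
  by move=> k _ ne; apply: eq_bigr => a _; rewrite /GammaV HxV.
rewrite (@sum_diff1 _ _ _ (i, j)) //; last by move=> [k l] _ ne /=; rewrite HxE.
rewrite (@sum_diff1 _ _ _ v) //; last by move=> k _ ne; rewrite HxV.
rewrite /= HxEij HxVv.
have -> : \sum_(a < d) \sum_(b < d) GammaE eta CE lam xiE' i j a b = T * expR (- ln T).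
  rewrite /T /totsum big_distrl; apply: eq_bigr => a _ /=.
  rewrite big_distrl; apply: eq_bigr => b _ /=.
  by rewrite /GammaE HxEij -expRD; congr expR; lra.
have -> : \sum_(a < d) GammaV E eta CV lam xiV' v a = S * expR (- ln S).
  rewrite /S big_distrl; apply: eq_bigr => a _ /=.
  by rewrite /GammaV HxVv -expRD; congr expR; lra.
have hT : 0 <= T by apply: sumr_ge0 => a _; apply: sumr_ge0 => b _; apply/ltW/expR_gt0.
have hS : 0 <= S by apply: sumr_ge0 => a _; apply/ltW/expR_gt0.
have := bal_ineq _ _ hT; have := bal_ineq _ _ hS; rewrite /T /S /totsum; lra.
Qed.

Lemma GV_shift (R : realType) (n d : nat) (E : {set 'I_n * 'I_n}) (eta : R)
  (CV : 'I_n -> 'I_d -> R) lam lam' xiV (i j : 'I_n) (a : 'I_d) (c : R) :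
  j \in nbrs E i -> (forall l, l != j -> lam' i l a = lam i l a) ->
  lam' i j a = lam i j a + c ->
  GammaV E eta CV lam' xiV i a = GammaV E eta CV lam xiV i a * expR c.
Proof.
move=> jn Hl Hj; rewrite /GammaV (bigD1 j) //= [in RHS](bigD1 j) //= Hj -expRD.
rewrite (eq_bigr (fun l => lam i l a)); last by move=> l /andP[_ nl]; apply: Hl.
congr expR; lra.
Qed.

Theorem lemma1 (R : realType) (n d : nat) (E : {set 'I_n * 'I_n}) (eta : R)
  (CV : 'I_n -> 'I_d -> R) (CE : 'I_n -> 'I_n -> 'I_d -> 'I_d -> R)
  (i j : 'I_n)
  (lam : 'I_n -> 'I_n -> 'I_d -> R) (xiE : 'I_n -> 'I_n -> R) (xiV : 'I_n -> R) :
  simple_edges E -> 0 < eta -> (i, j) \in E ->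
  let GE := GammaE eta CE lam xiE in
  let GV := GammaV E eta CV lam xiV in
  let L0 := Lyap E eta CV CE lam xiE xiV in
  (* (a) *)
  (forall lam' : 'I_n -> 'I_n -> 'I_d -> R,
     (forall k l x, (k, l) != (i, j) -> lam' k l x = lam k l x) ->
     (forall x, lam' i j x =
        lam i j x + 2^-1 * ln (rowsum (GE i j) x / GV i x)) ->
     Lyap E eta CV CE lam' xiE xiV - L0 =
       2 * hellinger (rowsum (GE i j)) (GV i) ^+ 2) /\
  (* (b) *)
  (forall (xiE' : 'I_n -> 'I_n -> R) (xiV' : 'I_n -> R),
     (forall k l, (k, l) != (i, j) -> xiE' k l = xiE k l) ->
     xiE' i j = xiE i j + ln (totsum (GE i j)) ->
     (forall k, k != i -> xiV' k = xiV k) ->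
     xiV' i = xiV i + ln (\sum_(x < d) GV i x) ->
     0 <= Lyap E eta CV CE lam xiE' xiV' - L0) /\
  (* (c) *)
  (forall lam' : 'I_n -> 'I_n -> 'I_d -> R,
     (forall k l x, (k, l) != (j, i) -> lam' k l x = lam k l x) ->
     (forall x, lam' j i x =
        lam j i x + 2^-1 * ln (colsum (GE i j) x / GV j x)) ->
     Lyap E eta CV CE lam' xiE xiV - L0 =
       2 * hellinger (colsum (GE i j)) (GV j) ^+ 2) /\
  (* (d) *)
  (forall (xiE' : 'I_n -> 'I_n -> R) (xiV' : 'I_n -> R),
     (forall k l, (k, l) != (i, j) -> xiE' k l = xiE k l) ->
     xiE' i j = xiE i j + ln (totsum (GE i j)) ->
     (forall k, k != j -> xiV' k = xiV k) ->
     xiV' j = xiV j + ln (\sum_(x < d) GV j x) ->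
     0 <= Lyap E eta CV CE lam xiE' xiV' - L0).
Proof.
move=> [Hloop Hanti] Heta Hij GE GV L0.
have ij : i != j by exact: (Hloop _ Hij).
have ji : j != i by rewrite eq_sym.
have nji : (j, i) \notin E by exact: (Hanti _ _ Hij).
split; [|split; [|split]].
-
  move=> lam' Hl' Hlij; rewrite /L0 Lyap_diff.
  rewrite (@sum_diff1 _ _ _ (i, j)) //; last first.
    move=> [k l] Hkl ne; apply: eq_bigr => a _; apply: eq_bigr => b _.
    rewrite /GammaE /= (Hl' k l) // (Hl' l k) //.
    apply/negP => /eqP [lk ki]; subst l k; by rewrite Hkl in nji.
  rewrite (@sum_diff1 _ _ _ i) //; last first.
    move=> k _ ne; apply: eq_bigr => a _; rewrite /GammaV; congr expR; congr (_ + _).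
    by apply: eq_bigr => l _; rewrite Hl' // xpair_eqE negb_and ne.
  rewrite !subrr !addr0 hell_sq -!sumrB -big_split /=.
  apply: eq_bigr => a _.
  have -> : \sum_(b < d) GammaE eta CE lam' xiE (i, j).1 (i, j).2 a b =
    rowsum (GE i j) a * expR (- (2^-1 * ln (rowsum (GE i j) a / GV i a))).
    rewrite /rowsum big_distrl; apply: eq_bigr => b _ /=.
    rewrite /GE /GammaE Hlij (Hl' j i) ?xpair_eqE ?(negbTE ji) // -expRD.
    by congr expR; lra.
  have -> : GammaV E eta CV lam' xiV i a =
    GV i a * expR (2^-1 * ln (rowsum (GE i j) a / GV i a)).
    have jn : j \in nbrs E i by rewrite inE Hij.
    rewrite (@GV_shift _ _ _ E eta CV lam lam' xiV i j a _ jn _ (Hlij a)) //.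
    by move=> l nl; rewrite Hl' // xpair_eqE negb_and nl orbT.
  have r0 : 0 < rowsum (GE i j) a.
    apply: (lt_le_trans (expR_gt0 (- eta * CE i j a a - lam i j a - lam j i a - xiE i j))).
    rewrite /rowsum (bigD1 a) //= lerDl; apply: sumr_ge0 => b _; exact/ltW/expR_gt0.
  have g0 : 0 < GV i a by exact: expR_gt0.
  rewrite -(hell_key _ _ _ r0 g0) /GE /GV /rowsum /=; lra.
- by move=> xiE' xiV' H1 H2 H3 H4; exact: (@partBD _ _ _ _ _ _ _ _ _ _ _ _ _ Hij _ _ H1 H2 H3 H4).
-
  move=> lam' Hl' Hlji; rewrite /L0 Lyap_diff.
  rewrite (@sum_diff1 _ _ _ (i, j)) //; last first.
    move=> [k l] Hkl ne; apply: eq_bigr => a _; apply: eq_bigr => b _.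
    rewrite /GammaE /= (Hl' k l); last first.
      apply/negP => /eqP [kj li]; subst l k; by rewrite Hkl in nji.
    by rewrite (Hl' l k) // xpair_eqE; move: ne; rewrite xpair_eqE andbC.
  rewrite (@sum_diff1 _ _ _ j) //; last first.
    move=> k _ ne; apply: eq_bigr => a _; rewrite /GammaV; congr expR; congr (_ + _).
    by apply: eq_bigr => l _; rewrite Hl' // xpair_eqE negb_and ne.
  rewrite !subrr !addr0 hell_sq /= [X in X - _]exchange_big [X in _ - X]exchange_big /=.
  rewrite -!sumrB -big_split /=.
  apply: eq_bigr => b _.
  have -> : \sum_(a < d) GammaE eta CE lam' xiE i j a b =
    colsum (GE i j) b * expR (- (2^-1 * ln (colsum (GE i j) b / GV j b))).
    rewrite /colsum big_distrl; apply: eq_bigr => a _ /=.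
    rewrite /GE /GammaE Hlji (Hl' i j) ?xpair_eqE ?(negbTE ij) // -expRD.
    by congr expR; lra.
  have -> : GammaV E eta CV lam' xiV j b =
    GV j b * expR (2^-1 * ln (colsum (GE i j) b / GV j b)).
    have jn : i \in nbrs E j by rewrite inE Hij orbT.
    rewrite (@GV_shift _ _ _ E eta CV lam lam' xiV j i b _ jn _ (Hlji b)) //.
    by move=> l nl; rewrite Hl' // xpair_eqE negb_and nl orbT.
  have r0 : 0 < colsum (GE i j) b.
    apply: (lt_le_trans (expR_gt0 (- eta * CE i j b b - lam i j b - lam j i b - xiE i j))).
    rewrite /colsum (bigD1 b) //= lerDl; apply: sumr_ge0 => a _; exact/ltW/expR_gt0.
  have g0 : 0 < GV j b by exact: expR_gt0.
  rewrite -(hell_key _ _ _ r0 g0) /GE /GV /colsum /=; lra.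
- by move=> xiE' xiV' H1 H2 H3 H4; exact: (@partBD _ _ _ _ _ _ _ _ _ _ _ _ _ Hij _ _ H1 H2 H3 H4).
Qed.
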